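(* Let $(P,\le,A_1\ldots A_k)$ be a regular poset of width $w$ and let $(u,s)$ be any characteristics. Then the poset $(\mathcal{P}(u,s),\le_{(u,s)})$ of active nodes with characteristics $(u,s)$ has width at most $\lfloor\sqrt{w}\rfloor$.
   Context: Let $(P,\le)$ be a finite poset of width $w$. For $A\subseteq P$ let $A{\uparrow}=\{y: x\le y\text{ for some }x\in A\}$, $A{\downarrow}=\{y: y\le x\text{ for some }x\in A\}$. For maximal antichains $A,B$ write $A\sqsubseteq B$ if $A\subseteq B{\downarrow}$, and $A\sqsubset B$ if also $A\ne B$. For disjoint antichains $A\sqsubset B$, $(A,B,<)$ is the bipartite graph with classes $A,B$ and edges $(a<b)$ for $a\in A,b\in B$, $a<b$; it is regular if every edge lies in a perfect matching. A regular poset $(P,\le,A_1\ldots A_k)$: $A_1,\dots,A_k$ are maximum antichains partitioning $P$, $(\{A_1,\dots,A_k\},\sqsubseteq)$ is a linear order with minimum $A_1$ and maximum $A_2$, $a<b$ for all $a\in A_1,b\in A_2$, and for every $t\in[2,k]$ and every $A_p\sqsubset A_s$ consecutive in $(\{A_1,\dots,A_t\},\sqsubseteq)$ the graph $(A_p,A_s,<)$ is regular. A node is a bipartite graph $N=(X,Y,<)$ where, for some such consecutive pair $A_p\sqsubset A_s$ (at some stage $t$), $X\subseteq A_p$, $Y\subseteq A_s$ and $X\cup Y$ is the vertex set of a connected component of $(A_p,A_s,<)$. Its width is $|X|=|Y|$, $\mathrm{Int}(N)=X{\uparrow}\cap Y{\downarrow}$, and its surplus is the largest $k$ such that $|A{\uparrow}\cap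 Y|\ge\min\{|A|+k,|Y|\}$ for all non-empty $A\subseteq X$ ($\infty$ if $N$ is complete bipartite); its characteristics is the pair (width, surplus). Node tree: the set of all nodes, where when for $t\ge3$ the antichain $A_t$ is inserted between $A_p\sqsubset A_s$ consecutive at stage $t-1$, each node $M$ of $(A_p,A_t,<)$ or $(A_t,A_s,<)$ is a child of the unique node $N$ of $(A_p,A_s,<)$ with $\mathrm{Int}(M)\subset\mathrm{Int}(N)$; it is a rooted tree with root $(A_1,A_2,<)$. A Dilworth clique of width $m$ in a node $(X,Y,<)$ is a set $\{x_1,\dots,x_m,y_1,\dots,y_m\}$ with $x_i\in X$, $y_i\in Y$, $x_i<y_j$ for all $i,j\in[m]$, such that the edges $x_1<y_1,\dots,x_m<y_m$ extend to a perfect matching of $(X,Y,<)$. A node is active if it contains a Dilworth clique of width $\lceil\sqrt{w}\rceil$ and no proper ancestor of it in the node tree has the same characteristics. For each active node $N$ fix a Dilworth clique $R(N)$ of width $\lceil\sqrt w\rceil$ in $N$. $\mathcal{P}(u,s)$ is the set of active nodes with characteristics $(u,s)$, and for $N,K\in\mathcal{P}(u,s)$, $N<_{(u,s)}K$ iff there are a maximal element $x$ of $(R(N),\le)$ and a minimal element $y$ of $(R(K),\le)$ with $x\le y$; $\le_{(u,s)}$ is the resulting partial order. *)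

(* Defs.v *)
From Stdlib Require Import Relation_Operators.
From mathcomp Require Import all_boot.

Set Implicit Arguments.
Unset Strict Implicit.
Unset Printing Implicit Defensive.

Definition floor_sqrt (w : nat) : nat := \max_(i < w.+1 | i * i <= w) i.
Definition ceil_sqrt (w : nat) : nat := \big[minn/w]_(i < w.+1 | w <= i * i) i.

Section RegularPoset.
Variables (T : finType) (le : rel T).

Definition is_poset : Prop :=
  reflexive le /\ antisymmetric le /\ transitive le.

Definition lt (x y : T) : bool := (x != y) && le x y.

Definition up (A : {set T}) : {set T} := [set y | [exists x in A, le x y]].
Definition down (A : {set T}) : {set T} := [set y | [exists x in A, le y x]].

Definition antichain (A : {set T}) : bool :=
  [forall x in A, forall y in A, le x y ==> (x == y)].

Definition width : nat := \max_(A : {set T} | antichain A) #|A|.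

Definition maximum_antichain (A : {set T}) : bool :=
  antichain A && (#|A| == width).

Definition sqle (A B : {set T}) : bool := A \subset down B.
Definition sqlt (A B : {set T}) : bool := sqle A B && (A != B).

Definition perfect_matching (X Y : {set T}) (f : T -> T) : Prop :=
  {in X &, injective f} /\ f @: X = Y /\ (forall x, x \in X -> lt x (f x)).

Definition regular_bip (X Y : {set T}) : Prop :=
  forall a b, a \in X -> b \in Y -> lt a b ->
    exists f, perfect_matching X Y f /\ f a = b.

Definition bip_adj (X Y : {set T}) : rel T :=
  fun x y => ((x \in X) && (y \in Y) && lt x y) || ((y \in X) && (x \in Y) && lt y x).

(* N = (N.1, N.2) is a node of (X, Y, <): N.1 ∪ N.2 is the vertex set of a
   connected component of (X, Y, <), with N.1 ⊆ X and N.2 ⊆ Y. *)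
Definition node_of (X Y : {set T}) (N : {set T} * {set T}) : Prop :=
  exists2 x, x \in X :|: Y &
    N.1 = X :&: [set y | connect (bip_adj X Y) x y] /\
    N.2 = Y :&: [set y | connect (bip_adj X Y) x y].

Definition Int (N : {set T} * {set T}) : {set T} := up N.1 :&: down N.2.

Definition complete_bip (X Y : {set T}) : bool :=
  [forall x in X, forall y in Y, lt x y].

Definition surplus_ok (X Y : {set T}) (k : nat) : bool :=
  [forall B : {set T}, ((B \subset X) && (B != set0)) ==>
     (minn (#|B| + k) #|Y| <= #|up B :&: Y|)].

(* s = None encodes surplus = infinity *)
Definition is_surplus (X Y : {set T}) (s : option nat) : bool :=
  match s with
  | None => complete_bip X Y
  | Some k => ~~ complete_bip X Y && surplus_ok X Y k && ~~ surplus_ok X Y k.+1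
  end.

Definition has_char (N : {set T} * {set T}) (c : nat * option nat) : Prop :=
  #|N.1| = c.1 /\ is_surplus N.1 N.2 c.2.

Definition dclique (X Y : {set T}) (m : nat) (C : {set T}) : Prop :=
  exists Cx Cy : {set T},
    [/\ Cx \subset X, Cy \subset Y, #|Cx| = m, #|Cy| = m & C = Cx :|: Cy] /\
    (forall x y, x \in Cx -> y \in Cy -> lt x y) /\
    (exists f, perfect_matching X Y f /\ f @: Cx = Cy).

Section WithAntichains.
Variables (k : nat) (A : nat -> {set T}).

Definition idx (i : nat) : bool := (1 <= i <= k).

Definition consec (t p s : nat) : Prop :=
  [/\ 1 <= p <= t, 1 <= s <= t, sqlt (A p) (A s) &
      ~ exists q, [/\ 1 <= q <= t, sqlt (A p) (A q) & sqlt (A q) (A s)]].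

Definition regular_poset : Prop :=
  2 <= k /\
  (forall i, idx i -> maximum_antichain (A i)) /\
  (forall i j, idx i -> idx j -> i != j -> [disjoint A i & A j]) /\
  (forall x, exists2 i, idx i & x \in A i) /\
  (forall i j, idx i -> idx j -> sqle (A i) (A j) \/ sqle (A j) (A i)) /\
  (forall i, idx i -> sqle (A 1) (A i) /\ sqle (A i) (A 2)) /\
  (forall a b, a \in A 1 -> b \in A 2 -> lt a b) /\
  (forall t p s, 2 <= t <= k -> consec t p s -> regular_bip (A p) (A s)).

Definition is_node (N : {set T} * {set T}) : Prop :=
  exists t p s, [/\ 2 <= t <= k, consec t p s & node_of (A p) (A s) N].

Definition child (M N : {set T} * {set T}) : Prop :=
  exists t p s,
    3 <= t <= k /\ consec t.-1 p s /\ sqlt (A p) (A t) /\ sqlt (A t) (A s) /\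
    (node_of (A p) (A t) M \/ node_of (A t) (A s) M) /\
    node_of (A p) (A s) N /\ Int M \proper Int N.

Definition proper_ancestor (K N : {set T} * {set T}) : Prop :=
  clos_trans _ child N K.

Definition active (N : {set T} * {set T}) : Prop :=
  [/\ is_node N,
      (exists C, dclique N.1 N.2 (ceil_sqrt width) C) &
      (forall K c, proper_ancestor K N -> has_char N c -> ~ has_char K c)].

End WithAntichains.

Definition maximal_in (C : {set T}) (x : T) : Prop :=
  x \in C /\ (forall z, z \in C -> le x z -> z = x).
Definition minimal_in (C : {set T}) (y : T) : Prop :=
  y \in C /\ (forall z, z \in C -> le z y -> z = y).

Definition lt_us (R : {set T} * {set T} -> {set T}) (N K : {set T} * {set T}) : Prop :=
  exists x y, [/\ maximal_in (R N) x, minimal_in (R K) y & le x y].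

End RegularPoset.

(* Main.v *)
Require Import Defs.
From mathcomp Require Import all_boot.
From Stdlib Require Import Classical ClassicalEpsilon Relation_Operators.
From mathcomp Require Import zify.

Set Implicit Arguments.
Unset Strict Implicit.
Unset Printing Implicit Defensive.

Lemma choice_fun (X Y : Type) (P : X -> Y -> Prop) :
  (forall x, exists y, P x y) -> exists f : X -> Y, forall x, P x (f x).
Proof.
move=> H; exists (fun x => proj1_sig (constructive_indefinite_description _ (H x))).
by move=> x; case: (constructive_indefinite_description _ (H x)).
Qed.


Lemma ceil_facts w : 0 < w -> w <= ceil_sqrt w * ceil_sqrt w /\ 0 < ceil_sqrt w.
Proof.
move=> w0; rewrite /ceil_sqrt; split.
  apply: (big_ind (fun x => w <= x * x)).
  - by rewrite leq_pmull.
  - by move=> x y hx hy; rewrite /minn; case: ifP.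
  - by move=> i.
apply: (big_ind (fun x => 0 < x)) => //.
- by move=> x y hx hy; rewrite /minn; case: ifP.
- move=> i hi; case: (posnP i) hi => [->|//]; rewrite muln0; lia.
Qed.

Lemma arith w p : 0 < w -> p * ceil_sqrt w <= w -> p <= floor_sqrt w.
Proof.
move=> w0 h; have [h1 h2] := ceil_facts w0.
set c := ceil_sqrt w in h h1 h2.
have pc : p <= c by case: (leqP p c) => // hpc; nia.
have pw : p < w.+1 by nia.
rewrite /floor_sqrt.
have := @leq_bigmax_cond _ (fun i : 'I_w.+1 => i * i <= w) (fun i : 'I_w.+1 => nat_of_ord i) (Ordinal pw).
apply => /=; nia.
Qed.

Ltac slia := repeat match goal with
 | H : ?P |- _ => lazymatch P with
     | is_true (_ <= _) => fail | is_true (_ < _) => fail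
     | is_true ((_ <= _) && _) => fail | is_true ((_ < _) && _) => fail
     | is_true (_ || _) => fail | is_true (~~ _) => fail | @eq nat _ _ => fail
     | _ => clear H end end; lia.

Section Basic.
Variables (T : finType) (le : rel T) (k : nat) (A : nat -> {set T}).
Hypothesis Hpo : is_poset le.
Hypothesis Hreg : regular_poset le k A.
Variable x0 : T.

Lemma le_refl x : le x x. Proof. by case: Hpo => r _; apply: r. Qed.
Lemma le_trans x y z : le x y -> le y z -> le x z.
Proof. by case: Hpo => _ [_ t] h1 h2; apply: (t y). Qed.
Lemma le_anti x y : le x y -> le y x -> x = y.
Proof. by case: Hpo => _ [a _] h1 h2; apply: a; rewrite h1 h2. Qed.
Lemma ltW x y : lt le x y -> le x y. Proof. by case/andP. Qed.
Lemma lt_neq x y : lt le x y -> x != y. Proof. by case/andP. Qed.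
Lemma ltE x y : x != y -> le x y -> lt le x y. Proof. by move=> h1 h2; apply/andP. Qed.

Definition w := width le.

Lemma k2 : 2 <= k. Proof. by case: Hreg. Qed.
Lemma idx1 : idx k 1. Proof. by rewrite /idx /=; have := k2; lia. Qed.
Lemma idx2 : idx k 2. Proof. by rewrite /idx /=; have := k2; lia. Qed.

Lemma maxA i : idx k i -> maximum_antichain le (A i).
Proof. by case: Hreg => _ [h _]; apply: h. Qed.

Lemma antiA i a b : idx k i -> a \in A i -> b \in A i -> le a b -> a = b.
Proof.
move=> /maxA /andP [/forallP H _] ha hb hab.
by have /implyP/(_ ha)/forallP/(_ b)/implyP/(_ hb)/implyP/(_ hab)/eqP := H a.
Qed.

Lemma cardA i : idx k i -> #|A i| = w.
Proof. by move=> /maxA /andP [_ /eqP]. Qed.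

Lemma disjA i j a : idx k i -> idx k j -> a \in A i -> a \in A j -> i = j.
Proof.
case: Hreg => _ [_ [h _]] hi hj ai aj; apply/eqP; apply/negP => /negP ne.
by have := h i j hi hj ne; rewrite disjoint_subset => /subsetP /(_ a ai); rewrite inE aj.
Qed.

Lemma levex a : exists2 i, idx k i & a \in A i.
Proof. by case: Hreg => _ [_ [_ [h _]]]; apply: h. Qed.

Lemma linA i j : idx k i -> idx k j -> sqle le (A i) (A j) \/ sqle le (A j) (A i).
Proof. by case: Hreg => _ [_ [_ [_ [h _]]]]; apply: h. Qed.

Lemma bot_top i : idx k i -> sqle le (A 1) (A i) /\ sqle le (A i) (A 2).
Proof. by case: Hreg => _ [_ [_ [_ [_ [h _]]]]]; apply: h. Qed.

Lemma sqleP (X Y : {set T}) : sqle le X Y <-> forall a, a \in X -> exists2 b, b \in Y & le a b.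
Proof.
split.
  move=> /subsetP H a /H; rewrite inE => /existsP [b /andP [hb hab]]; by exists b.
move=> H; apply/subsetP => a /H [b hb hab]; rewrite inE; apply/existsP; exists b; by rewrite hb.
Qed.

Lemma sqle_refl X : sqle le X X.
Proof. by apply/sqleP => a ha; exists a => //; apply: le_refl. Qed.

Lemma sqle_trans X Y Z : sqle le X Y -> sqle le Y Z -> sqle le X Z.
Proof.
move=> /sqleP h1 /sqleP h2; apply/sqleP => a /h1 [b /h2 [c hc hbc] hab].
by exists c => //; apply: le_trans hbc.
Qed.

Lemma antichain_le (X : {set T}) : antichain le X -> #|X| <= w.
Proof. by move=> h; rewrite /w /width; exact: (@leq_bigmax_cond _ (fun B : {set T} => antichain le B) (fun B : {set T} => #|B|) X h). Qed.

Lemma nonemptyA i : idx k i -> exists a, a \in A i.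
Proof.
move=> hi; have : 0 < #|A i|.
  rewrite cardA // /w; have : #|[set x0]| <= width le.
    apply: antichain_le; apply/forallP => a; apply/implyP; rewrite inE => /eqP ->.
    apply/forallP => b; apply/implyP; rewrite inE => /eqP -> ; by apply/implyP.
  by rewrite cards1.
by case/card_gt0P => a ha; exists a.
Qed.

Lemma up_cover i j b : idx k i -> idx k j -> sqle le (A i) (A j) -> b \in A j ->
  exists2 a, a \in A i & le a b.
Proof.
move=> hi hj hij hb.
case: (boolP [exists a in A i, le a b]) => [/existsP [a /andP [ha hab]]|/existsP H].
  by exists a.
exfalso.
have bnot : b \notin A i.
  apply/negP => bi; apply: H; exists b; by rewrite bi le_refl.
have : #|b |: A i| <= w.
  apply: antichain_le; apply/forallP => a; apply/implyP => ha.
  apply/forallP => c; apply/implyP => hc; apply/implyP => hac.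
  move: ha hc hac; rewrite !inE => /orP [/eqP ->|ha] /orP [/eqP ->|hc] hac //.
  - exfalso; move/sqleP: hij => /(_ c hc) [d hd hcd].
    have := antiA hj hb hd (le_trans hac hcd) => eq; subst d.
    apply: H; exists c; by rewrite hc hcd.
  - exfalso; apply: H; exists a; by rewrite ha hac.
  - by apply/eqP; apply: (antiA hi ha hc hac).
by rewrite cardsU1 bnot cardA //; lia.
Qed.

Lemma sqle_anti i j : idx k i -> idx k j -> sqle le (A i) (A j) -> sqle le (A j) (A i) -> i = j.
Proof.
move=> hi hj /sqleP h1 /sqleP h2; have [a ha] := nonemptyA hi.
have [b hb hab] := h1 a ha; have [c hc hbc] := h2 b hb.
have eac := antiA hi ha hc (le_trans hab hbc); subst c.
have eab := le_anti hab hbc; subst b.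
by apply: (disjA hi hj ha hb).
Qed.

Definition slt i j := sqle le (A i) (A j) /\ i <> j.

Lemma sqltE i j : idx k i -> idx k j -> sqlt le (A i) (A j) <-> slt i j.
Proof.
move=> hi hj; rewrite /sqlt /slt; split.
  case/andP => h1 h2; split => // eij; subst; by rewrite eqxx in h2.
case=> h1 h2; rewrite h1 /=; apply/negP => /eqP e.
apply: h2; apply: sqle_anti => //; by rewrite e sqle_refl.
Qed.

Lemma cmp_level i j a b : idx k i -> idx k j -> a \in A i -> b \in A j -> le a b ->
  sqle le (A i) (A j).
Proof.
move=> hi hj ha hb hab; case: (linA hi hj) => // /sqleP h.
have [c hc hbc] := h b hb.
have e := antiA hi ha hc (le_trans hab hbc); subst c.
have e := le_anti hab hbc; subst b.
by rewrite (disjA hi hj ha hb) sqle_refl.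
Qed.


Lemma idx_le i t : t <= k -> 1 <= i <= t -> idx k i.
Proof. by rewrite /idx; lia. Qed.

Lemma down_lt i j : idx k i -> idx k j -> slt i j -> #|down le (A i)| < #|down le (A j)|.
Proof.
move=> hi hj [hij nij]; apply: proper_card; apply/properP; split.
  apply/subsetP => a; rewrite !inE => /existsP [b /andP [hb hab]].
  move/sqleP: hij => /(_ b hb) [c hc hbc]; apply/existsP; exists c; by rewrite hc (le_trans hab hbc).
case: (boolP (A j \subset down le (A i))) => [hji|/subsetPn [b hb hnb]].
  by exfalso; apply: nij; apply: sqle_anti.
exists b => //; rewrite inE; apply/existsP; exists b; by rewrite hb le_refl.
Qed.

Lemma up_lt i j : idx k i -> idx k j -> slt i j -> #|up le (A j)| < #|up le (A i)|.
Proof.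
move=> hi hj [hij nij]; apply: proper_card; apply/properP; split.
  apply/subsetP => a; rewrite !inE => /existsP [b /andP [hb hab]].
  have [c hc hcb] := up_cover hi hj hij hb.
  apply/existsP; exists c; by rewrite hc (le_trans hcb hab).
have [a ha] := nonemptyA hi.
exists a; first by rewrite inE; apply/existsP; exists a; rewrite ha le_refl.
rewrite inE; apply/negP => /existsP [b /andP [hb hba]].
move/sqleP: hij => /(_ a ha) [c hc hac].
have e := antiA hj hb hc (le_trans hba hac); subst c.
have e := le_anti hba hac; subst b.
by apply: nij; apply: (disjA hi hj ha hb).
Qed.

Lemma min_ex (P : nat -> Prop) (better : nat -> nat -> Prop) (mu : nat -> nat) :
  (forall a b, P a -> P b -> better b a -> mu b < mu a) ->
  forall j0, P j0 -> exists j, P j /\ forall q, P q -> ~ better q j.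
Proof.
move=> Hmu j0; move: {2}(mu j0) (leqnn (mu j0)) => n; elim: n j0 => [|n IH] j0 hj0 Pj0.
  exists j0; split => // q Pq bq; have := Hmu _ _ Pj0 Pq bq; lia.
case: (classic (exists q, P q /\ better q j0)) => [[q [Pq bq]]|H].
  apply: (IH q) => //; have := Hmu _ _ Pj0 Pq bq; lia.
exists j0; split => // q Pq bq; apply: H; by exists q.
Qed.

Lemma next_ex t i j0 : t <= k -> 1 <= i <= t -> 1 <= j0 <= t -> slt i j0 ->
  exists j, consec le A t i j.
Proof.
move=> tk hi hj0 sl.
have [j [[hj sij] H]] : exists j, (1 <= j <= t /\ slt i j) /\
    forall q, (1 <= q <= t /\ slt i q) -> ~ slt q j.
  apply: (@min_ex _ _ (fun j => #|down le (A j)|) _ j0) => //.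
  move=> a b [ha _] [hb _] ba; apply: down_lt => //; apply: (idx_le tk) => //.
exists j; split => //.
  by apply/sqltE => //; apply: (idx_le tk).
case=> q [hq /sqltE h1 /sqltE h2]; apply: (H q).
  by split => //; apply: h1; apply: (idx_le tk).
by apply: h2; apply: (idx_le tk).
Qed.

Lemma prev_ex t j i0 : t <= k -> 1 <= j <= t -> 1 <= i0 <= t -> slt i0 j ->
  exists i, consec le A t i j.
Proof.
move=> tk hj hi0 sl.
have [i [[hi sij] H]] : exists i, (1 <= i <= t /\ slt i j) /\
    forall q, (1 <= q <= t /\ slt q j) -> ~ slt i q.
  apply: (@min_ex _ (fun q i => slt i q) (fun i => #|up le (A i)|) _ i0) => //.
  move=> a b [ha _] [hb _] ba; apply: up_lt => //; apply: (idx_le tk) => //.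
exists i; split => //.
  by apply/sqltE => //; apply: (idx_le tk).
case=> q [hq /sqltE h1 /sqltE h2]; apply: (H q).
  by split => //; apply: h2; apply: (idx_le tk).
by apply: h1; apply: (idx_le tk).
Qed.

Lemma slt_trans_le i j l : idx k i -> idx k j -> idx k l -> slt i j -> sqle le (A j) (A l) -> slt i l.
Proof.
move=> hi hj hl [h1 n1] h2; split; first exact: sqle_trans h2.
move=> e; subst l; apply: n1; exact: sqle_anti.
Qed.

Lemma le_slt_trans i j l : idx k i -> idx k j -> idx k l -> sqle le (A i) (A j) -> slt j l -> slt i l.
Proof.
move=> hi hj hl h1 [h2 n2]; split; first exact: sqle_trans h2.
move=> e; subst l; apply: n2; exact: sqle_anti.
Qed.

Lemma slt_lin i j : idx k i -> idx k j -> ~ slt i j -> sqle le (A j) (A i).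
Proof.
move=> hi hj H; case: (linA hi hj) => // h.
case: (eqVneq i j) => [->|ne]; first exact: sqle_refl.
by exfalso; apply: H; split => // /eqP; rewrite (negbTE ne).
Qed.

Lemma pm_ex i j : consec le A k i j -> exists g, perfect_matching le (A i) (A j) g.
Proof.
move=> hc; have hreg : regular_bip le (A i) (A j).
  case: Hreg => _ [_ [_ [_ [_ [_ [_ h]]]]]]; apply: (h k) => //; rewrite leqnn andbT; exact: k2.
case: hc => hi hj /sqltE; rewrite /idx => H _.
have [hi' hj'] : idx k i /\ idx k j by [].
have [sl nij] := H hi' hj'.
have [a ha] := nonemptyA hi'.
have /sqleP/(_ a ha) [b hb hab] := sl.
have : lt le a b.
  apply: ltE => //; apply/eqP => e; subst b; apply: nij; exact: (disjA hi' hj' ha hb).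
by move=> /(hreg a b ha hb) [g [pm _]]; exists g.
Qed.


Lemma bip_sym X Y : symmetric (bip_adj le X Y).
Proof. by move=> a b; rewrite /bip_adj orbC. Qed.

Lemma connS X Y a b : connect (bip_adj le X Y) a b = connect (bip_adj le X Y) b a.
Proof. by apply: sym_connect_sym; apply: bip_sym. Qed.

Lemma node1 X Y N a : node_of le X Y N -> a \in N.1 -> a \in X.
Proof. by case=> b _ [-> _]; rewrite inE => /andP []. Qed.
Lemma node2 X Y N a : node_of le X Y N -> a \in N.2 -> a \in Y.
Proof. by case=> b _ [_ ->]; rewrite inE => /andP []. Qed.

Lemma node_up X Y N a b : node_of le X Y N -> a \in N.1 -> b \in Y -> lt le a b -> b \in N.2.
Proof.
case=> c _ [E1 E2]; rewrite E1 E2 !inE => /andP [ha ca] hb hab; rewrite hb /=.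
apply: (connect_trans ca); apply: connect1; by rewrite /bip_adj ha hb hab.
Qed.

Lemma node_down X Y N a b : node_of le X Y N -> b \in N.2 -> a \in X -> lt le a b -> a \in N.1.
Proof.
case=> c _ [E1 E2]; rewrite E1 E2 !inE => /andP [hb cb] ha hab; rewrite ha /=.
apply: (connect_trans cb); apply: connect1; by rewrite /bip_adj ha hb hab orbT.
Qed.

Lemma node_same X Y N1 N2 a b : node_of le X Y N1 -> node_of le X Y N2 ->
  a \in N1.1 -> b \in N2.2 -> lt le a b -> N1 = N2.
Proof.
case=> c1 _ [E1 F1]; case=> c2 _ [E2 F2].
rewrite E1 F2 !inE => /andP [ha ca] /andP [hb cb] hab.
have c12 : connect (bip_adj le X Y) c1 c2.
  apply: (connect_trans ca); rewrite connS; apply: (connect_trans cb).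
  by apply: connect1; rewrite /bip_adj ha hb hab orbT.
have E : [set y | connect (bip_adj le X Y) c1 y] = [set y | connect (bip_adj le X Y) c2 y].
  apply/setP => y; rewrite !inE; apply/idP/idP => h.
    by apply: (connect_trans _ h); rewrite connS.
  exact: (connect_trans c12 h).
by rewrite [N1]surjective_pairing [N2]surjective_pairing E1 F1 E2 F2 E.
Qed.

Lemma IntP (N : {set T} * {set T}) z : reflect ((exists2 a, a \in N.1 & le a z) /\ (exists2 b, b \in N.2 & le z b))
  (z \in Int le N).
Proof.
rewrite /Int !inE; apply: (iffP andP) => [[/existsP [a /andP [h1 h2]] /existsP [b /andP [h3 h4]]]|].
  by split; [exists a|exists b].
case=> [[a h1 h2] [b h3 h4]]; split; apply/existsP; [exists a|exists b]; by apply/andP.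
Qed.

Section NodeIdx.
Variables (p s : nat) (N : {set T} * {set T}).
Hypotheses (hp : idx k p) (hs : idx k s) (hps : slt p s) (hN : node_of le (A p) (A s) N).

Lemma nodeA_lt a b : a \in A p -> b \in A s -> le a b -> lt le a b.
Proof.
move=> ha hb hab; apply: ltE => //; apply/eqP => e; subst b.
by case: hps => _; apply; apply: (disjA hp hs ha hb).
Qed.

Lemma node1_succ a : a \in N.1 -> exists2 b, b \in N.2 & lt le a b.
Proof.
move=> ha; have hA := node1 hN ha; case: hps => /sqleP /(_ a hA) [b hb hab] _.
exists b; last exact: nodeA_lt.
by apply: (node_up hN ha hb); exact: nodeA_lt.
Qed.

Lemma node2_pred b : b \in N.2 -> exists2 a, a \in N.1 & lt le a b.
Proof.
move=> hb; have hB := node2 hN hb; case: hps => sl _.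
have [a ha hab] := up_cover hp hs sl hB.
exists a; last exact: nodeA_lt.
by apply: (node_down hN hb ha); exact: nodeA_lt.
Qed.

Lemma node1_Int a : a \in N.1 -> a \in Int le N.
Proof.
move=> ha; apply/IntP; split; first by exists a => //; apply: le_refl.
by have [b hb hab] := node1_succ ha; exists b => //; apply: ltW.
Qed.

Lemma node2_Int b : b \in N.2 -> b \in Int le N.
Proof.
move=> hb; apply/IntP; split; last by exists b => //; apply: le_refl.
by have [a ha hab] := node2_pred hb; exists a => //; apply: ltW.
Qed.

Lemma node_nonempty1 : exists a, a \in N.1.
Proof.
case: hN => c hc [E1 E2]; move: hc; rewrite inE => /orP [hc|hc].
  by exists c; rewrite E1 !inE hc /= connect0.
have [a ha hac] := up_cover hp hs (proj1 hps) hc.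
exists a; rewrite E1 !inE ha /=; rewrite connS; apply: connect1.
apply/orP; left; apply/andP; split; [apply/andP; split|]; [exact: ha|exact: hc|exact: nodeA_lt].
Qed.

Lemma node_nonempty2 : exists b, b \in N.2.
Proof.
have [a ha] := node_nonempty1; have [b hb _] := node1_succ ha; by exists b.
Qed.

End NodeIdx.

Lemma node_eq_Int p s N1 N2 z : idx k p -> idx k s -> slt p s ->
  node_of le (A p) (A s) N1 -> node_of le (A p) (A s) N2 ->
  z \in Int le N1 -> z \in Int le N2 -> N1 = N2.
Proof.
move=> hp hs hps h1 h2 /IntP [[a ha haz] _] /IntP [_ [b hb hzb]].
apply: (node_same h1 h2 ha hb); apply: (nodeA_lt hp hs hps).
- exact: (node1 h1 ha).
- exact: (node2 h2 hb).
exact: le_trans hzb.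
Qed.


Lemma node_conn X Y M a b : node_of le X Y M -> a \in M.1 :|: M.2 -> b \in M.1 :|: M.2 ->
  connect (bip_adj le X Y) a b.
Proof.
case=> c _ [E1 E2]; rewrite E1 E2 !inE => ha hb.
have ca : connect (bip_adj le X Y) c a by case/orP: ha => /andP [].
have cb : connect (bip_adj le X Y) c b by case/orP: hb => /andP [].
by rewrite connS in ca; apply: connect_trans ca cb.
Qed.

Lemma path_inv (e : rel T) (Inv : T -> Prop) :
  (forall u v, Inv u -> e u v -> Inv v) -> forall a b, Inv a -> connect e a b -> Inv b.
Proof.
move=> Hs a b Ia /connectP [pth pp ->]; elim: pth a Ia pp => [|v pth IH] a Ia //=.
case/andP => e1 pp; apply: IH pp; exact: Hs e1.
Qed.

Lemma IntSub1 q r s' M : idx k q -> idx k r -> idx k s' -> slt q r -> slt r s' ->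
  node_of le (A q) (A r) M ->
  exists P, node_of le (A q) (A s') P /\ Int le M \proper Int le P.
Proof.
move=> hq hr hs qr rs hM.
have qs : slt q s' by apply: (slt_trans_le hq hr hs qr (proj1 rs)).
have [a ha] := node_nonempty1 hq hr qr hM.
have haq := node1 hM ha.
set big := bip_adj le (A q) (A s').
set P := (A q :&: [set y | connect big a y], A s' :&: [set y | connect big a y]).
have hP : node_of le (A q) (A s') P by exists a; [rewrite inE haq | ].
pose Inv v := (v \in A q -> connect big a v) /\
  (v \in A r -> exists2 y, y \in A s' & le v y /\ connect big a y).
have Hinv : forall v, connect (bip_adj le (A q) (A r)) a v -> Inv v.
  move=> v1; apply: (@path_inv (bip_adj le (A q) (A r)) Inv _ a v1); last first.
    split => [_|hr']; first exact: connect0.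
    by exfalso; case: qr => _; apply; apply: (disjA hq hr haq hr').
  move=> u v [I1 I2] /orP [/andP [/andP [hu hv] huv]|/andP [/andP [hv hu] hvu]].
    split => [hv'|_]; first by exfalso; case: qr => _; apply; apply: (disjA hq hr hv' hv).
    case: rs => /sqleP /(_ v hv) [y hy hvy] _; exists y => //; split => //.
    apply: (connect_trans (I1 hu)); apply: connect1; apply/orP; left.
    apply/andP; split; [apply/andP; split|]; [exact: hu|exact: hy|].
    by apply: (nodeA_lt hq hs qs hu hy); apply: le_trans (ltW huv) hvy.
  split => [_|hv']; last first.
    by exfalso; case: qr => _; apply; apply: (disjA hq hr hv hv').
  have [y hy [huy cy]] := I2 hu.
  apply: (connect_trans cy); apply: connect1; apply/orP; right.
  apply/andP; split; [apply/andP; split|]; [exact: hv|exact: hy|].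
  by apply: (nodeA_lt hq hs qs hv hy); apply: le_trans (ltW hvu) huy.
have Hc : forall v, v \in M.1 :|: M.2 -> Inv v.
  move=> v hv; apply: Hinv; apply: (node_conn hM) => //; by rewrite inE ha.
have hU1 : forall v, v \in M.1 -> v \in M.1 :|: M.2 by move=> v hv; rewrite inE hv.
have hU2 : forall v, v \in M.2 -> v \in M.1 :|: M.2 by move=> v hv; rewrite inE hv orbT.
exists P; split => //; apply/properP; split.
  apply/subsetP => z /IntP [[x hx hxz] [b hb hzb]]; apply/IntP; split.
    exists x => //; rewrite !inE (node1 hM hx) /=.
    by apply: (proj1 (Hc x _)); [rewrite inE hx|exact: (node1 hM hx)].
  have [y hy [hby cy]] := proj2 (Hc b (hU2 _ hb)) (node2 hM hb).
  exists y; first by rewrite !inE hy cy.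
  exact: le_trans hby.
have [b hb] := node_nonempty2 hq hr qr hM.
have [y hy [hby cy]] := proj2 (Hc b (hU2 _ hb)) (node2 hM hb).
exists y.
  by apply: (node2_Int hq hs qs hP); rewrite !inE hy cy.
apply/negP => /IntP [_ [b' hb' hyb']].
have hb'r := node2 hM hb'.
case: rs => /sqleP /(_ b' hb'r) [y' hy' hb'y'] nrs.
have e := antiA hs hy hy' (le_trans hyb' hb'y'); subst y'.
have e := le_anti hyb' hb'y'; subst b'.
by apply: nrs; apply: (disjA hr hs hb'r hy).
Qed.

Lemma IntSub2 p' q r M : idx k p' -> idx k q -> idx k r -> slt p' q -> slt q r ->
  node_of le (A q) (A r) M ->
  exists P, node_of le (A p') (A r) P /\ Int le M \proper Int le P.
Proof.
move=> hp hq hr pq qr hM.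
have pr : slt p' r by apply: (slt_trans_le hp hq hr pq (proj1 qr)).
have [b hb] := node_nonempty2 hq hr qr hM.
have hbr := node2 hM hb.
set big := bip_adj le (A p') (A r).
set P := (A p' :&: [set y | connect big b y], A r :&: [set y | connect big b y]).
have hP : node_of le (A p') (A r) P by exists b; [rewrite inE hbr orbT | ].
pose Inv v := (v \in A r -> connect big b v) /\
  (v \in A q -> exists2 x, x \in A p' & le x v /\ connect big b x).
have Hinv : forall v, connect (bip_adj le (A q) (A r)) b v -> Inv v.
  move=> v1; apply: (@path_inv (bip_adj le (A q) (A r)) Inv _ b v1); last first.
    split => [_|hq']; first exact: connect0.
    by exfalso; case: qr => _; apply; apply: (disjA hq hr hq' hbr).
  move=> u v [I1 I2] /orP [/andP [/andP [hu hv] huv]|/andP [/andP [hv hu] hvu]].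
    split => [_|hv']; last first.
      by exfalso; case: qr => _; apply; apply: (disjA hq hr hv' hv).
    have [x hx [hxu cx]] := I2 hu.
    apply: (connect_trans cx); apply: connect1; apply/orP; left.
    apply/andP; split; [apply/andP; split|]; [exact: hx|exact: hv|].
    by apply: (nodeA_lt hp hr pr hx hv); apply: le_trans hxu (ltW huv).
  split => [hv'|_]; first by exfalso; case: qr => _; apply; apply: (disjA hq hr hv hv').
  have [x hx hxv] := up_cover hp hq (proj1 pq) hv; exists x => //; split => //.
  apply: (connect_trans (I1 hu)); apply: connect1; apply/orP; right.
  apply/andP; split; [apply/andP; split|]; [exact: hx|exact: hu|].
  by apply: (nodeA_lt hp hr pr hx hu); apply: le_trans hxv (ltW hvu).
have Hc : forall v, v \in M.1 :|: M.2 -> Inv v.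
  move=> v hv; apply: Hinv; apply: (node_conn hM) => //; by rewrite inE hb orbT.
have hU1 : forall v, v \in M.1 -> v \in M.1 :|: M.2 by move=> v hv; rewrite inE hv.
have hU2 : forall v, v \in M.2 -> v \in M.1 :|: M.2 by move=> v hv; rewrite inE hv orbT.
exists P; split => //; apply/properP; split.
  apply/subsetP => z /IntP [[a ha haz] [y hy hzy]]; apply/IntP; split; last first.
    exists y => //; rewrite !inE (node2 hM hy) /=.
    by apply: (proj1 (Hc y _)); [rewrite inE hy orbT|exact: (node2 hM hy)].
  have [x hx [hxa cx]] := proj2 (Hc a (hU1 _ ha)) (node1 hM ha).
  exists x; first by rewrite !inE hx cx.
  exact: le_trans haz.
have [a ha] := node_nonempty1 hq hr qr hM.
have [x hx [hxa cx]] := proj2 (Hc a (hU1 _ ha)) (node1 hM ha).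
exists x.
  by apply: (node1_Int hp hr pr hP); rewrite !inE hx cx.
apply/negP => /IntP [[a' ha' ha'x] _].
have ha'q := node1 hM ha'.
have [x' hx' hx'a'] := up_cover hp hq (proj1 pq) ha'q.
have e := antiA hp hx' hx (le_trans hx'a' ha'x); subst x'.
have e := le_anti hx'a' ha'x; subst a'.
by case: pq => _; apply; apply: (disjA hp hq hx ha'q).
Qed.


Lemma consec_idx t p s : t <= k -> consec le A t p s ->
  [/\ idx k p, idx k s, slt p s, (1 <= p <= t) && (1 <= s <= t) &
      forall q, 1 <= q <= t -> slt p q -> slt q s -> False].
Proof.
move=> tk [hp hs sl H].
have ip := idx_le tk hp; have iS := idx_le tk hs.
split => //; [by apply/sqltE| by rewrite hp hs|].
move=> q hq h1 h2; apply: H; exists q; split => //; apply/sqltE => //; exact: (idx_le tk).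
Qed.

Lemma TL p s t N z : 2 <= t <= k -> consec le A t p s -> node_of le (A p) (A s) N ->
  z \in Int le N ->
  forall t' q r M, t' <= k -> consec le A t' q r -> node_of le (A q) (A r) M ->
  sqle le (A p) (A q) -> sqle le (A r) (A s) -> (q != p) || (r != s) -> z \in Int le M ->
  clos_trans _ (child le k A) M N.
Proof.
move=> /andP [t2 tk] hc hN hzN t'.
have [ip iS ps /andP [hp hs] Hps] := consec_idx tk hc.
elim: t' {-2}t' (leqnn t') => [|n IH] t' ht' q r M t'k hc' hM pq rs nqr hzM.
  by have [_ _ _ /andP [h _] _] := consec_idx t'k hc'; slia.
have [iq ir qr /andP [hq hr] Hqr] := consec_idx t'k hc'.
have tlt : t < maxn q r.
  case: (boolP (q == p)) nqr => [/eqP eqp|nqp] /= nrs.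
    subst q; case: (leqP r t) => hrt; last slia; exfalso.
    apply: (Hps r) => //; first slia.
    by split => // e; subst r; rewrite eqxx in nrs.
  have pq' : slt p q by split => // e; rewrite e eqxx in nqp.
  have qs : slt q s := slt_trans_le iq ir iS qr rs.
  case: (leqP q t) => hqt; last slia.
  by exfalso; apply: (Hps q) => //; slia.
have qnr : q != r by apply/eqP => e; subst r; case: qr.
case: (ltngtP q r) => [qltr|rltq|e]; last by rewrite e eqxx in qnr.
-
  have rt : t < r by move: tlt; rewrite (maxn_idPr (ltnW qltr)).
  have qs : slt q s := slt_trans_le iq ir iS qr rs.
  have [s' hc2] := @next_ex (r.-1) q s ltac:(slia) ltac:(slia) ltac:(slia) qs.
  have r1k : r.-1 <= k by slia.
  have [iq' iS' qs' /andP [_ hs'] Hqs'] := consec_idx r1k hc2.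
  have rs' : slt r s'.
    case: (classic (slt r s')) => // /(slt_lin ir iS') h; exfalso.
    apply: (Hqr s') => //; first slia.
    by split => // e; subst s'; slia.
  have s's : sqle le (A s') (A s).
    case: (classic (slt s s')) => [h|/(slt_lin iS iS') //].
    by exfalso; apply: (Hqs' s) => //; slia.
  have [P [hP sub]] := IntSub1 iq ir iS' qr rs' hM.
  have hch : child le k A M P.
    exists r, q, s'; split; first by apply/andP; split; slia.
    split => //; split; first by apply/sqltE.
    split; first by apply/sqltE.
    by split; [left|split].
  have hzP : z \in Int le P by move/properP: sub => [/subsetP /(_ z hzM)].
  case: (boolP ((q == p) && (s' == s))) => [/andP [/eqP e1 /eqP e2]|hne].
    subst q s'; have <- := node_eq_Int ip iS ps hP hN hzP hzN; exact: t_step.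
  apply: (@t_trans _ _ M P N); first exact: t_step.
  apply: (IH (r.-1) _ q s' P) => //; [slia|by move: hne; rewrite negb_and].
-
  have qt : t < q by move: tlt; rewrite (maxn_idPl (ltnW rltq)).
  have pr : slt p r := le_slt_trans ip iq ir pq qr.
  have [p' hc2] := @prev_ex (q.-1) r p ltac:(slia) ltac:(slia) ltac:(slia) pr.
  have q1k : q.-1 <= k by slia.
  have [ip' _ p'r /andP [hp' _] Hp'r] := consec_idx q1k hc2.
  have p'q : slt p' q.
    case: (classic (slt p' q)) => // /(slt_lin ip' iq) h; exfalso.
    apply: (Hqr p') => //; first slia.
    by split => // e; subst p'; slia.
  have pp' : sqle le (A p) (A p').
    case: (classic (slt p' p)) => [h|/(slt_lin ip' ip) //].
    by exfalso; apply: (Hp'r p) => //; slia.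
  have [P [hP sub]] := IntSub2 ip' iq ir p'q qr hM.
  have hch : child le k A M P.
    exists q, p', r; split; first by apply/andP; split; slia.
    split => //; split; first by apply/sqltE.
    split; first by apply/sqltE.
    by split; [right|split].
  have hzP : z \in Int le P by move/properP: sub => [/subsetP /(_ z hzM)].
  case: (boolP ((p' == p) && (r == s))) => [/andP [/eqP e1 /eqP e2]|hne].
    subst p' r; have <- := node_eq_Int ip iS ps hP hN hzP hzN; exact: t_step.
  apply: (@t_trans _ _ M P N); first exact: t_step.
  apply: (IH (q.-1) _ p' r P) => //; [slia|by move: hne; rewrite negb_and].
Qed.


Variables (R : {set T} * {set T} -> {set T}) (u : nat) (s0 : option nat).
Variable S : {set {set T} * {set T}}.
Hypothesis HS : forall N, N \in S -> active le k A N /\ has_char le N (u, s0).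
Hypothesis Hanti : forall N K, N \in S -> K \in S -> N <> K -> ~ lt_us le R N K.

Variables (tN pN sN : {set T} * {set T} -> nat) (Cx Cy : {set T} * {set T} -> {set T})
  (fN : {set T} * {set T} -> T -> T).
Hypothesis HnodeS : forall N, N \in S ->
  [/\ 2 <= tN N <= k, consec le A (tN N) (pN N) (sN N) & node_of le (A (pN N)) (A (sN N)) N].
Hypothesis HcliqS : forall N, N \in S ->
  [/\ Cx N \subset N.1, Cy N \subset N.2, R N = Cx N :|: Cy N,
      (forall a b, a \in Cx N -> b \in Cy N -> lt le a b) &
      (perfect_matching le N.1 N.2 (fN N) /\ fN N @: Cx N = Cy N)].

Lemma nodeS N : N \in S ->
  [/\ idx k (pN N), idx k (sN N), slt (pN N) (sN N) & node_of le (A (pN N)) (A (sN N)) N].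
Proof.
move=> hN; have [/andP [t2 tk] hc hn] := HnodeS hN.
by have [ip iS ps _ _] := consec_idx tk hc.
Qed.

Lemma not_anc N M : N \in S -> M \in S -> clos_trans _ (child le k A) M N -> False.
Proof.
move=> hN hM hc; have [[_ _ Hact] chM] := HS hM; have [_ chN] := HS hN.
exact: (Hact N (u, s0) hc chM chN).
Qed.

Lemma D2 N M y : N \in S -> M \in S -> y \in N.2 -> y \in M.2 -> N = M.
Proof.
move=> hN hM yN yM.
have [ipN isN psN nN] := nodeS hN; have [ipM isM psM nM] := nodeS hM.
have [/andP [t2N tkN] cN _] := HnodeS hN; have [/andP [t2M tkM] cM _] := HnodeS hM.
have es : sN N = sN M := disjA isN isM (node2 nN yN) (node2 nM yM).
have yIN := node2_Int ipN isN psN nN yN; have yIM := node2_Int ipM isM psM nM yM.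
case: (eqVneq (pN N) (pN M)) => [ep|np].
  rewrite ep es in nN; exact: (node_eq_Int ipM isM psM nN nM yIN yIM).
have tN2 : 2 <= tN N <= k by rewrite t2N tkN.
have tM2 : 2 <= tN M <= k by rewrite t2M tkM.
have sl1 : sqle le (A (sN M)) (A (sN N)) by rewrite es; exact: sqle_refl.
have sl2 : sqle le (A (sN N)) (A (sN M)) by rewrite es; exact: sqle_refl.
exfalso; case: (linA ipN ipM) => h.
  apply: (not_anc hN hM).
  by apply: (TL tN2 cN nN yIN tkM cM nM h sl1 _ yIM); rewrite eq_sym np.
apply: (not_anc hM hN).
by apply: (TL tM2 cM nM yIM tkN cN nN h sl2 _ yIN); rewrite np.
Qed.

Definition II (M : {set T} * {set T}) := Int le M :\: (M.1 :|: M.2).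

Lemma D3 N M y : N \in S -> M \in S -> y \in N.2 -> y \in II M -> False.
Proof.
move=> hN hM yN; rewrite /II in_setD in_setU negb_or => /andP [/andP [y1 y2] yI].
have [ipN isN psN nN] := nodeS hN; have [ipM isM psM nM] := nodeS hM.
have [/andP [t2N tkN] cN _] := HnodeS hN; have [/andP [t2M tkM] cM _] := HnodeS hM.
have [_ _ _ /andP [hpN hsN] HN] := consec_idx tkN cN.
have [_ _ _ /andP [hpM hsM] HM] := consec_idx tkM cM.
have yA := node2 nN yN.
move/IntP: (yI) => [[x hx hxy] [b hb hyb]].
have xA := node1 nM hx; have bA := node2 nM hb.
have qs : slt (pN M) (sN N).
  split; first exact: (cmp_level ipM isN xA yA hxy).
  move=> e; rewrite -e in yA.
  have e' := antiA ipM xA yA hxy; subst x; by rewrite hx in y1.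
have sr : slt (sN N) (sN M).
  split; first exact: (cmp_level isN isM yA bA hyb).
  move=> e; rewrite e in yA.
  have e' := antiA isM yA bA hyb; subst b; by rewrite hb in y2.
have st : tN M < sN N.
  case: (leqP (sN N) (tN M)) => // h; exfalso.
  by apply: (HM (sN N)) => //; slia.
have qp : sqle le (A (pN M)) (A (pN N)).
  case: (classic (slt (pN N) (pN M))) => [h|/(slt_lin ipN ipM) //].
  by exfalso; apply: (HN (pN M)) => //; slia.
have tM2 : 2 <= tN M <= k by rewrite t2M tkM.
apply: (not_anc hM hN).
apply: (TL tM2 cM nM yI tkN cN nN qp (proj1 sr) _ (node2_Int ipN isN psN nN yN)).
by apply/orP; right; apply/eqP => e; case: sr.
Qed.


Lemma pm_in X Y f a : perfect_matching le X Y f -> a \in X -> f a \in Y.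
Proof. by case=> _ [<- _] ha; apply: imset_f. Qed.
Lemma pm_lt X Y f a : perfect_matching le X Y f -> a \in X -> lt le a (f a).
Proof. by case=> _ [_ h]; apply: h. Qed.
Lemma pm_inj X Y f a b : perfect_matching le X Y f -> a \in X -> b \in X -> f a = f b -> a = b.
Proof. by case=> h _; apply: h. Qed.

Variables (lev : T -> nat) (nx : nat -> nat) (gx : nat -> T -> T).
Hypothesis Hlev : forall z, idx k (lev z) /\ z \in A (lev z).
Hypothesis Hnx : forall i, idx k i -> i != 2 ->
  consec le A k i (nx i) /\ perfect_matching le (A i) (A (nx i)) (gx i).

Definition Step z :=
  if [pick N in S | z \in N.1] is Some N then fN N z
  else if lev z != 2 then gx (lev z) z else z.

Definition reach z := forall M, M \in S -> z \notin II M.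

Lemma levE z i : idx k i -> z \in A i -> lev z = i.
Proof. by move=> hi hz; have [h1 h2] := Hlev z; apply: (disjA h1 hi h2 hz). Qed.

Lemma Step_cases z :
  (exists2 N, N \in S & z \in N.1 /\ Step z = fN N z) \/
  ((forall N, N \in S -> z \notin N.1) /\
   ((lev z != 2 /\ Step z = gx (lev z) z) \/ (lev z = 2 /\ Step z = z))).
Proof.
rewrite /Step; case: pickP => [N /andP [hN hz]|H].
  by left; exists N.
right; split.
  by move=> N hN; have := H N; rewrite hN /= => ->.
case: (eqVneq (lev z) 2) => e; [right|left]; by [].
Qed.

Lemma Step_spec z : (Step z = z /\ z \in A 2) \/ lt le z (Step z).
Proof.
case: (Step_cases z) => [[N hN [hz ->]]|[_ [[ne ->]|[e ->]]]].
- right; have [_ _ _ _ [pm _]] := HcliqS hN; exact: pm_lt pm hz.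
- right; have [il hl] := Hlev z; have [_ pm] := Hnx il ne; exact: pm_lt pm hl.
- left; split => //; have [_ hl] := Hlev z; by rewrite -e.
Qed.

Lemma Step_le z : le z (Step z).
Proof. by case: (Step_spec z) => [[-> _]|/ltW]; [apply: le_refl|]. Qed.

Lemma consec_k_uniq i i' j : consec le A k i j -> consec le A k i' j -> i = i'.
Proof.
move=> c1 c2; have [ii ij s1 /andP [h1 _] H1] := consec_idx (leqnn k) c1.
have [ii' _ s2 /andP [h2 _] H2] := consec_idx (leqnn k) c2.
case: (eqVneq i i') => // ne; exfalso.
case: (linA ii ii') => h.
  by apply: (H1 i') => //; split => // e; rewrite e eqxx in ne.
by apply: (H2 i) => //; split => // e; rewrite e eqxx in ne.
Qed.

Lemma S5 N y z : N \in S -> y \in N.2 -> reach z -> z <> y -> Step z = y ->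
  z \in N.1 /\ fN N z = y.
Proof.
move=> hN yN rz zy.
case: (Step_cases z) => [[M hM [hz ->]] e|[noX [[ne ->]|[_ ->]]] e]; last by [].
  have [_ _ _ _ [pm _]] := HcliqS hM.
  have yM : y \in M.2 by rewrite -e; apply: (pm_in pm hz).
  by have eMN := D2 hM hN yM yN; subst M.
exfalso; have [il hl] := Hlev z; have [cc pm] := Hnx il ne.
have [_ inx slx /andP [_ _] Hc] := consec_idx (leqnn k) cc.
have [ip iS ps nN] := nodeS hN.
have yA := node2 nN yN.
have ej : nx (lev z) = sN N by apply: (disjA inx iS _ yA); rewrite -e; apply: (pm_in pm hl).
have hlz : lt le z y by rewrite -e; exact: (pm_lt pm hl).
have pi : sqle le (A (pN N)) (A (lev z)).
  case: (classic (slt (lev z) (pN N))) => [h|/(slt_lin il ip) //].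
  exfalso; apply: (Hc (pN N)) => //; last by rewrite ej.
have [x hx hxz] := up_cover ip il pi hl.
have xN : x \in N.1.
  apply: (node_down nN yN hx); apply: (nodeA_lt ip iS ps hx yA).
  exact: le_trans hxz (ltW hlz).
have := rz N hN; rewrite /II in_setD in_setU negb_or (negbTE (noX N hN)) /=.
rewrite andbC; move/negP; apply; apply/andP; split.
  apply/IntP; split; [exists x => //|exists y => //]; exact: ltW.
apply/negP => zN; have zA := node2 nN zN.
have := disjA il iS hl zA; rewrite -ej => e'.
by case: slx => _; rewrite -e'.
Qed.

Lemma S4 z z' : reach z -> reach z' -> z <> z' -> Step z = Step z' ->
  Step z = z \/ Step z' = z'.
Proof.
move=> rz rz' nz e.
case: (classic (Step z = z)) => [|n1]; first by left.
case: (classic (Step z' = z')) => [|n2]; first by right.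
exfalso.
case: (classic (exists2 N, N \in S & Step z \in N.2)) => [[N hN wN]|noY].
  have [h1 f1] := S5 hN wN rz (fun e' => n1 (esym e')) erefl.
  have wN' : Step z \in N.2 by [].
  rewrite e in wN'.
  have [h2 f2] := S5 hN wN' rz' (fun e' => n2 (esym e')) erefl.
  have [_ _ _ _ [pm _]] := HcliqS hN.
  apply: nz; apply: (pm_inj pm h1 h2); by rewrite f1 f2 e.
have gstep : forall v, Step v <> v ->
    (forall N, N \in S -> Step v \notin N.2) ->
    lev v != 2 /\ Step v = gx (lev v) v.
  move=> v nv nY; case: (Step_cases v) => [[N hN [hv ev]]|[_ [[ne ev]|[_ ev]]]] //.
  exfalso; have [_ _ _ _ [pm _]] := HcliqS hN.
  by have := nY N hN; rewrite ev (pm_in pm hv).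
have nY : forall N, N \in S -> Step z \notin N.2.
  by move=> N hN; apply/negP => h; apply: noY; exists N.
have nY' : forall N, N \in S -> Step z' \notin N.2 by rewrite -e.
have [ne1 e1] := gstep z n1 nY.
have [ne2 e2] := gstep z' n2 nY'.
have [il hl] := Hlev z; have [il' hl'] := Hlev z'.
have [c1 pm1] := Hnx il ne1; have [c2 pm2] := Hnx il' ne2.
have [_ i1 _ _ _] := consec_idx (leqnn k) c1.
have [_ i2 _ _ _] := consec_idx (leqnn k) c2.
have ej : nx (lev z) = nx (lev z') .
  apply: (disjA i1 i2 (pm_in pm1 hl)); by rewrite -e1 e e2 (pm_in pm2 hl').
rewrite -ej in c2; have el := consec_k_uniq c1 c2.
rewrite -el in pm2 hl'.
apply: nz; apply: (pm_inj pm1 hl hl'); by rewrite -e1 e e2 el.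
Qed.


Lemma S3 z : reach z -> reach (Step z).
Proof.
move=> rz N hN.
case: (Step_cases z) => [[M hM [hz ->]]|[noX [[ne ->]|[_ ->]]]]; last exact: rz.
  apply/negP => h; have [_ _ _ _ [pm _]] := HcliqS hM.
  exact: (D3 hM hN (pm_in pm hz) h).
apply/negP => hw.
have [il hl] := Hlev z; have [cc pm] := Hnx il ne.
have [_ inx _ _ Hc] := consec_idx (leqnn k) cc.
set w := gx (lev z) z in hw.
have wA : w \in A (nx (lev z)) by apply: (pm_in pm hl).
have hzw : lt le z w by apply: (pm_lt pm hl).
move: hw; rewrite /II in_setD in_setU negb_or => /andP [/andP [w1 w2] /IntP [[x hx hxw] [b hb hwb]]].
have [ip iS ps nN] := nodeS hN.
have xA := node1 nN hx; have bA := node2 nN hb.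
have pj : slt (pN N) (nx (lev z)).
  split; first exact: (cmp_level ip inx xA wA hxw).
  move=> e; rewrite -e in wA; have e' := antiA ip xA wA hxw; by move: w1; rewrite -e' hx.
have pi : sqle le (A (pN N)) (A (lev z)).
  case: (classic (slt (lev z) (pN N))) => [h|/(slt_lin il ip) //].
  by exfalso; apply: (Hc (pN N)).
have [x' hx' hx'z] := up_cover ip il pi hl.
have hzb : le z b := le_trans (ltW hzw) hwb.
have x'N : x' \in N.1.
  apply: (node_down nN hb hx'); apply: (nodeA_lt ip iS ps hx' bA).
  exact: le_trans hx'z hzb.
have := rz N hN; rewrite /II in_setD in_setU negb_or (negbTE (noX N hN)) /=.
rewrite andbC; move/negP; apply; apply/andP; split.
  apply/IntP; split; [exists x' => //|exists b => //].
apply/negP => zN; have zA := node2 nN zN.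
have e := antiA iS zA bA hzb; subst b.
have e := le_anti (ltW hzw) hwb; rewrite -e in hzw.
by move: (lt_neq hzw); rewrite eqxx.
Qed.

Lemma S6 N y : N \in S -> y \in N.2 -> reach y.
Proof. by move=> hN yN M hM; apply/negP => h; apply: (D3 hN hM yN h). Qed.

Lemma iter_reach n z : reach z -> reach (iter n Step z).
Proof. by elim: n => //= n IH rz; apply: S3; apply: IH. Qed.

Lemma iter_le n z : le z (iter n Step z).
Proof. elim: n => [|n IH] /=; first exact: le_refl. exact: le_trans IH (Step_le _). Qed.

Lemma iter_fix n z : Step z = z -> iter n Step z = z.
Proof. by move=> h; elim: n => //= n ->. Qed.

Definition Up z := [set v | le z v].

Lemma iter_meas n z : Step (iter n Step z) = iter n Step z \/ n + #|Up (iter n Step z)| <= #|Up z|.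
Proof.
elim: n => [|n IH] /=; first by right.
case: IH => [h|h].
  by left; rewrite h h.
case: (Step_spec (iter n Step z)) => [[e _]|hl].
  by left; rewrite e e.
right; set v := iter n Step z in h hl *.
have : #|Up (Step v)| < #|Up v|.
  apply: proper_card; apply/properP; split.
    apply/subsetP => a; rewrite !inE => ha; exact: le_trans (ltW hl) ha.
  exists v; first by rewrite inE le_refl.
  rewrite inE; apply/negP => h'.
  by move: (lt_neq hl); rewrite {1}(le_anti (ltW hl) h') eqxx.
lia.
Qed.

Definition psi z := iter #|T| Step z.

Lemma psi_fix z : Step (psi z) = psi z.
Proof.
case: (iter_meas #|T| z) => // h; exfalso.
have : 0 < #|Up (psi z)| by apply/card_gt0P; exists (psi z); rewrite inE le_refl.
have : #|Up z| <= #|T| by apply: max_card.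
rewrite /psi in h *; lia.
Qed.

Lemma psi_top z : psi z \in A 2.
Proof. by case: (Step_spec (psi z)) => [[_ h]|h] //; move: (lt_neq h); rewrite psi_fix eqxx. Qed.


Lemma Cy2 N y : N \in S -> y \in Cy N -> y \in N.2.
Proof. by move=> hN hy; have [_ /subsetP h _ _ _] := HcliqS hN; apply: h. Qed.
Lemma Cx1 N y : N \in S -> y \in Cx N -> y \in N.1.
Proof. by move=> hN hy; have [/subsetP h _ _ _ _] := HcliqS hN; apply: h. Qed.

Lemma maxR N y : N \in S -> y \in Cy N -> maximal_in le (R N) y.
Proof.
move=> hN hy; have [_ _ eR Hc _] := HcliqS hN; have [ip iS ps nN] := nodeS hN.
split; first by rewrite eR inE hy orbT.
move=> v; rewrite eR inE => /orP [hv|hv] hyv.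
  have := Hc v y hv hy => hl; have e := le_anti hyv (ltW hl); subst v.
  by move: (lt_neq hl); rewrite eqxx.
by apply: esym; apply: (antiA iS (node2 nN (Cy2 hN hy)) (node2 nN (Cy2 hN hv)) hyv).
Qed.

Lemma minR N x : N \in S -> x \in Cx N -> minimal_in le (R N) x.
Proof.
move=> hN hx; have [_ _ eR Hc _] := HcliqS hN; have [ip iS ps nN] := nodeS hN.
split; first by rewrite eR inE hx.
move=> v; rewrite eR inE => /orP [hv|hv] hvx.
  by apply: (antiA ip (node1 nN (Cx1 hN hv)) (node1 nN (Cx1 hN hx)) hvx).
have := Hc x v hx hv => hl; have e := le_anti hvx (ltW hl); subst v.
by move: (lt_neq hl); rewrite eqxx.
Qed.

Lemma Klem N N' y y' b : N \in S -> N' \in S -> y \in Cy N -> y' \in Cy N' -> y <> y' ->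
  0 < b -> iter b Step y' = y -> (forall b', b' < b -> iter b' Step y' != y) -> False.
Proof.
move=> hN hN' hy hy' nyy' b0 eb Hmin.
have [_ _ _ Hc [pm eC]] := HcliqS hN; have [ip iS ps nN] := nodeS hN.
set z := iter b.-1 Step y'.
have iterS : forall n v, 0 < n -> Step (iter n.-1 Step v) = iter n Step v by case.
have ez : Step z = y by rewrite /z -eb iterS.
have hb1 : b.-1 < b by lia.
have nzy : z <> y by move=> e; move: (Hmin _ hb1); rewrite -/z e eqxx.
have rz : reach z := iter_reach _ (S6 hN' (Cy2 hN' hy')).
have [zN fz] := S5 hN (Cy2 hN hy) rz nzy ez.
have [x hx ex] : exists2 x, x \in Cx N & y = fN N x by move: hy; rewrite -eC => /imsetP.
have ezx : z = x by apply: (pm_inj pm zN (Cx1 hN hx)); rewrite fz ex.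
rewrite ezx in rz zN ez fz.
have hy'x : le y' x by rewrite -ezx; apply: iter_le.
case: (classic (N' = N)) => [e|ne].
  subst N'.
  have hxy : lt le x y := Hc x y hx hy.
  apply: nyy'; apply: esym.
  exact: (antiA iS (node2 nN (Cy2 hN hy')) (node2 nN (Cy2 hN hy)) (le_trans hy'x (ltW hxy))).
apply: (Hanti hN' hN ne); exists y', x; split => //.
- exact: maxR.
- exact: minR.
Qed.

Lemma psi_inj N N' y y' : N \in S -> N' \in S -> y \in Cy N -> y' \in Cy N' ->
  psi y = psi y' -> y = y'.
Proof.
move=> hN hN' hy hy' ep; apply: NNPP => nyy'.
have exA : exists a, [exists b : 'I_#|T|.+1, iter a Step y == iter b Step y'].
  by exists #|T|; apply/existsP; exists ord_max; apply/eqP; exact: ep.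
case: (ex_minnP exA) => a /existsP [b0 /eqP eab0] mina.
have exB : exists b, iter a Step y == iter b Step y' by exists b0; apply/eqP.
case: (ex_minnP exB) => b /eqP eab minb.
have bT : b <= #|T| by have := minb b0 (introT eqP eab0); have := ltn_ord b0; lia.
clear exB exA eab0; move: eab mina minb bT; case: a => [|a]; case: b => [|b] => eab mina minb bT.
- by apply: nyy'.
- apply: (Klem hN hN' hy hy' nyy' _ (esym eab)) => // b' hb'.
  apply/negP => /eqP e; have := minb b' (introT eqP (esym e)); lia.
- apply: (Klem hN' hN hy' hy (fun e => nyy' (esym e)) _ eab) => // a' ha'.
  apply/negP => /eqP e.
  have := mina a' (introT existsP (ex_intro _ ord0 (introT eqP e))); lia.
- set z1 := iter a Step y; set z2 := iter b Step y'.
  have e12 : Step z1 = Step z2 by [].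
  have r1 : reach z1 := iter_reach _ (S6 hN (Cy2 hN hy)).
  have r2 : reach z2 := iter_reach _ (S6 hN' (Cy2 hN' hy')).
  have bT' : b < #|T|.+1 by lia.
  case: (classic (z1 = z2)) => [e|ne].
    have := mina a (introT existsP (ex_intro _ (Ordinal bT') (introT eqP e))); lia.
  case: (S4 r1 r2 ne e12) => [f1|f2].
    have : iter a Step y = iter b.+1 Step y' by rewrite -/z1 -f1.
    move=> e; have := mina a (introT existsP (ex_intro _ (@Ordinal #|T|.+1 b.+1 bT) (introT eqP e))); lia.
  have : iter a.+1 Step y = iter b Step y' by rewrite /= -/z1 e12 f2.
  move=> e; have := minb b (introT eqP e); lia.
Qed.


Hypothesis HcardCy : forall N, N \in S -> #|Cy N| = ceil_sqrt (width le).

Lemma count_main : #|S| * ceil_sqrt (width le) <= width le.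
Proof.
set PS := [set p : ({set T} * {set T}) * T | (p.1 \in S) && (p.2 \in Cy p.1)].
have cPS : #|PS| = #|S| * ceil_sqrt (width le).
  rewrite -sum1_card.
  rewrite (eq_bigl (fun p : ({set T} * {set T}) * T => (p.1 \in S) && (p.2 \in Cy p.1)));
    last by move=> p; rewrite inE.
  rewrite -(pair_big_dep (fun N => N \in S) (fun N y => y \in Cy N) (fun _ _ => 1)) /=.
  rewrite -sum_nat_const; apply: eq_bigr => N hN; rewrite sum1_card; exact: HcardCy.
rewrite -cPS.
have inj : {in PS &, injective (fun p : ({set T} * {set T}) * T => psi p.2)}.
  move=> [N y] [N' y']; rewrite !inE /= => /andP [hN hy] /andP [hN' hy'] ep.
  have e := psi_inj hN hN' hy hy' ep; subst y'.
  by rewrite (D2 hN hN' (Cy2 hN hy) (Cy2 hN' hy')).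
rewrite -(card_in_imset inj).
have -> : width le = #|A 2| by rewrite (cardA idx2).
apply: subset_leq_card; apply/subsetP => v /imsetP [p _ ->]; exact: psi_top.
Qed.

End Basic.

Unset Implicit Arguments.

Theorem lemma13 (T : finType) (le : rel T) (k : nat) (A : nat -> {set T})
    (R : {set T} * {set T} -> {set T}) (u : nat) (s : option nat) :
  is_poset le ->
  regular_poset le k A ->
  (forall N, active le k A N -> dclique le N.1 N.2 (ceil_sqrt (width le)) (R N)) ->
  forall S : {set {set T} * {set T}},
    (forall N, N \in S -> active le k A N /\ has_char le N (u, s)) ->
    (forall N K, N \in S -> K \in S -> N <> K -> ~ lt_us le R N K) ->
    #|S| <= floor_sqrt (width le).
Proof.
move=> Hpo Hreg HR S HS Hanti.
case: (eqVneq S set0) => [->|nS]; first by rewrite cards0.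
have /set0Pn [N0 hN0] := nS.
have [x0 _] : exists x : T, True.
  have [[[t [p [q [_ _ [x _ _]]]]] _ _] _] := HS N0 hN0; by exists x.
have [lev Hlev] : exists lev : T -> nat, forall z, idx k (lev z) /\ z \in A (lev z).
  apply: (@choice_fun T nat (fun z i => idx k i /\ z \in A i)) => z; have [i hi hz] := levex Hreg z; by exists i.
have [F HF] : exists F : nat -> nat * (T -> T), forall i, idx k i -> i != 2 ->
    consec le A k i (F i).1 /\ perfect_matching le (A i) (A (F i).1) (F i).2.
  apply: (@choice_fun nat (nat * (T -> T)) (fun i Fi => idx k i -> i != 2 ->
    consec le A k i Fi.1 /\ perfect_matching le (A i) (A Fi.1) Fi.2)) => i; case: (classic (idx k i /\ i != 2)) => [[hi ne]|H].
    have sl : slt le A i 2.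
      by split; [exact: (bot_top Hreg hi).2 | move/eqP: ne].
    have [j hc] := next_ex Hpo Hreg x0 (leqnn k) hi (idx2 Hreg) sl.
    have [g pm] := pm_ex Hpo Hreg x0 hc.
    by exists (j, g).
  by exists (0, id) => hi ne; exfalso; apply: H.
have [G HG] : exists G : {set T} * {set T} -> (nat * nat * nat) * ({set T} * {set T} * (T -> T)),
    forall N, N \in S ->
    [/\ 2 <= (G N).1.1.1 <= k, consec le A (G N).1.1.1 (G N).1.1.2 (G N).1.2
       & node_of le (A (G N).1.1.2) (A (G N).1.2) N] /\
    [/\ (G N).2.1.1 \subset N.1, (G N).2.1.2 \subset N.2, R N = (G N).2.1.1 :|: (G N).2.1.2,
        (forall a b, a \in (G N).2.1.1 -> b \in (G N).2.1.2 -> lt le a b) &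
        (perfect_matching le N.1 N.2 (G N).2.2 /\ (G N).2.2 @: (G N).2.1.1 = (G N).2.1.2)] /\
    #|(G N).2.1.2| = ceil_sqrt (width le).
  apply: (@choice_fun _ _ (fun N (GN : (nat * nat * nat) * ({set T} * {set T} * (T -> T))) =>
    N \in S ->
    [/\ 2 <= GN.1.1.1 <= k, consec le A GN.1.1.1 GN.1.1.2 GN.1.2
       & node_of le (A GN.1.1.2) (A GN.1.2) N] /\
    [/\ GN.2.1.1 \subset N.1, GN.2.1.2 \subset N.2, R N = GN.2.1.1 :|: GN.2.1.2,
        (forall a b, a \in GN.2.1.1 -> b \in GN.2.1.2 -> lt le a b) &
        (perfect_matching le N.1 N.2 GN.2.2 /\ GN.2.2 @: GN.2.1.1 = GN.2.1.2)] /\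
    #|GN.2.1.2| = ceil_sqrt (width le))) => N; case: (classic (N \in S)) => [hN|hN]; last first.
    by exists ((0, 0, 0), (set0, set0, id)).
  have [[[t [p [q [ht hc hn]]]] _ _] _] := HS N hN.
  have [Cx0 [Cy0 [[sx sy cx cy eR] [Hc [f [pm ef]]]]]] := HR N (HS N hN).1.
  by exists ((t, p, q), (Cx0, Cy0, f)) => _ /=.
have := @count_main T le k A Hpo Hreg x0 R u s S HS Hanti
  (fun N => (G N).1.1.1) (fun N => (G N).1.1.2) (fun N => (G N).1.2)
  (fun N => (G N).2.1.1) (fun N => (G N).2.1.2) (fun N => (G N).2.2)
  (fun N hN => (HG N hN).1) (fun N hN => (HG N hN).2.1)
  lev (fun i => (F i).1) (fun i => (F i).2) Hlev HF (fun N hN => (HG N hN).2.2).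
apply: arith.
have [a ha] := nonemptyA Hreg x0 (idx2 Hreg).
have -> : width le = #|A 2| by rewrite (cardA Hreg (idx2 Hreg)).
apply/card_gt0P; by exists a.
Qed.
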